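(* Let $(H,L_H)$ be a right-resolving, regular and follower-separated labeled graph, and let $C$ be a terminal component in $H$. For each $v \in C$ there is a finite path $\gamma$ in $H$ such that $t_H(\gamma) = v$ and the word $L_H(\gamma)$ is synchronizing for $L_H(X_H)$.
   Context: A labeled graph $(H,L_H)$: finite directed graph (vertices $V_H$, edges $E_H$, source/terminal maps $s_H,t_H$) without sinks or sources, labeling $L_H:E_H\to A$, edge shift $X_H$; $L_H$ acts coordinatewise; $Y=L_H(X_H)$. Right-resolving: distinct edges with the same source have distinct labels. $f_H(v)=\{L_H(x): x$ a right-infinite path starting at $v\}$; for $y\in Y$, $F(y)=\{w\in Y[0,\infty): y_{(-\infty,-1]}w\in Y\}$ with $Y[0,\infty)=\{y_{[0,\infty)}:y\in Y\}$. A vertex $v$ is regular if there is $z\in X_H$ whose edge $z_{-1}$ ends at $v$ with $f_H(v)=F(L_H(z))$; the graph is regular if all vertices are. Follower-separated: $f_H(v)=f_H(w)\Rightarrow v=w$. Components: classes of mutually reachable recurrent vertices (a vertex is recurrent if there is a path from it to itself); a component $C$ is terminal if no path leads from $C$ to a different component. A word $w$ of a subshift $Y$ is synchronizing if whenever $u,v$ are words with $uw$ and $wv$ words of $Y$, then $uwv$ is a word of $Y$. *)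

(* Defs.v *)
From mathcomp Require Import all_boot all_order all_algebra.
Set Implicit Arguments. Unset Strict Implicit. Unset Printing Implicit Defensive.
Import Order.TTheory GRing.Theory Num.Theory.
Local Open Scope ring_scope.

Section LabeledGraph.
Variables (V E : finType) (A : Type) (s t : E -> V) (L : E -> A).

Definition no_sinks_sources : Prop :=
  forall v : V, (exists e, s e = v) /\ (exists e, t e = v).

Definition edge_shift (z : int -> E) : Prop :=
  forall i : int, t (z i) = s (z (i + 1)).

Definition sofic (y : int -> A) : Prop :=
  exists z, edge_shift z /\ y = (fun i => L (z i)).

Definition right_resolving : Prop :=
  forall e e' : E, s e = s e' -> L e = L e' -> e = e'.

Definition rpath (x : nat -> E) : Prop := forall n, t (x n) = s (x n.+1).
Definition fH (v : V) (w : nat -> A) : Prop :=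
  exists x, rpath x /\ s (x 0%N) = v /\ w = (fun n => L (x n)).

Definition Yplus (w : nat -> A) : Prop :=
  exists y, sofic y /\ w = (fun n => y n%:Z).

Definition glue (y : int -> A) (w : nat -> A) : int -> A :=
  fun i => if i < 0 then y i else w `|i|%N.

Definition Ffol (y : int -> A) (w : nat -> A) : Prop :=
  Yplus w /\ sofic (glue y w).

Definition regular_vertex (v : V) : Prop :=
  exists z, edge_shift z /\ t (z (-1)) = v /\
    (forall w, fH v w <-> Ffol (fun i => L (z i)) w).

Definition regular_graph : Prop := forall v, regular_vertex v.

Definition follower_separated : Prop :=
  forall v w : V, (forall u, fH v u <-> fH w u) -> v = w.

(* finite (nonempty) paths e0 :: p *)
Definition epath (e0 : E) (p : seq E) : bool := path (fun e f => t e == s f) e0 p.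

Definition reaches (u w : V) : Prop :=
  u = w \/ exists e0 p, [/\ epath e0 p, s e0 = u & t (last e0 p) = w].

Definition recurrent (v : V) : Prop :=
  exists e0 p, [/\ epath e0 p, s e0 = v & t (last e0 p) = v].

Definition component (C : {set V}) : Prop :=
  exists v0, recurrent v0 /\
    forall w, w \in C <-> (recurrent w /\ reaches v0 w /\ reaches w v0).

Definition terminal_component (C : {set V}) : Prop :=
  component C /\
  forall C', component C' -> C' <> C ->
    ~ exists u w, [/\ u \in C, w \in C' & reaches u w].

Definition word_of (w : seq A) : Prop :=
  exists y i, sofic y /\ w = [seq y (i + k%:Z) | k <- iota 0 (size w)].

Definition synchronizing (w : seq A) : Prop :=
  forall u x : seq A, word_of (u ++ w) -> word_of (w ++ x) -> word_of (u ++ w ++ x).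

End LabeledGraph.

(* Main.v *)
Require Import Defs.
From mathcomp Require Import all_boot all_order all_algebra zify.
From Stdlib Require Import ClassicalEpsilon Classical FunctionalExtensionality.
Set Implicit Arguments. Unset Strict Implicit. Unset Printing Implicit Defensive.
Import Order.TTheory GRing.Theory Num.Theory.

Section Walks.
Variables (V E : finType) (A : Type) (s t : E -> V) (L : E -> A).
Hypothesis Hrr : right_resolving s L.

Fixpoint walk (a : V) (w : seq A) (b : V) : Prop :=
  match w with
  | [::] => a = b
  | l :: w' => exists e, [/\ s e = a, L e = l & walk (t e) w' b]
  end.

Lemma walk_cat a w1 w2 b :
  walk a (w1 ++ w2) b <-> exists c, walk a w1 c /\ walk c w2 b.
Proof.
elim: w1 a => [|l w1 IH] a /=.
  split; [by move=> H; exists a | by move=> [c [-> H]]].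
split.
  move=> [e [He1 He2 /IH [c [H1 H2]]]]; exists c; split=> //; exists e; by split.
move=> [c [[e [He1 He2 H1]] H2]]; exists e; split=> //; apply/IH; by exists c.
Qed.

Lemma walk_det a w b b' : walk a w b -> walk a w b' -> b = b'.
Proof.
elim: w a => [|l w IH] a /=; first by move=> <- <-.
move=> [e [He1 He2 H]] [e' [He1' He2' H']].
have ee : e = e' by apply: Hrr; congruence.
subst e'; exact: IH H H'.
Qed.

Lemma walk_epath a l w b : walk a (l :: w) b ->
  exists e0 p, [/\ epath s t e0 p, s e0 = a, t (last e0 p) = b & map L (e0 :: p) = l :: w].
Proof.
elim: w a l => [|l' w IH] a l /=.
  move=> [e [He1 He2 He3]]; exists e, [::]; split=> //; by rewrite He2.
move=> [e [He1 He2 /IH [e0 [p [Hp Hs Ht Hm]]]]].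
exists e, (e0 :: p); split=> //=.
- by rewrite /epath /= Hs eqxx.
- by move: Hm => /= [-> ->]; rewrite He2.
Qed.

Lemma epath_walk e0 p : epath s t e0 p -> walk (s e0) (map L (e0 :: p)) (t (last e0 p)).
Proof.
elim: p e0 => [|e1 p IH] e0 /=.
  move=> _; exists e0; by split.
move=> /andP [/eqP H1 H2]; exists e0; split=> //; rewrite H1; exact: IH.
Qed.

Lemma reaches_trans a b c : reaches s t a b -> reaches s t b c -> reaches s t a c.
Proof.
move=> [->|[e0 [p [Hp Hs Ht]]]] // [<-|[f0 [q [Hq Hs' Ht']]]]; first by right; exists e0, p.
right; exists e0, (p ++ f0 :: q); split=> //.
- by move: Hp Hq; rewrite /epath cat_path /= Ht Hs' eqxx => -> ->.
- by rewrite last_cat.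
Qed.

Lemma walk_reaches a w b : walk a w b -> reaches s t a b.
Proof.
case: w => [|l w]; first by move=> /= ->; left.
move=> /walk_epath [e0 [p [Hp Hs Ht _]]]; right; by exists e0, p.
Qed.


Lemma mkseq_add (T : Type) (f : nat -> T) m k :
  mkseq f (m + k) = mkseq f m ++ mkseq (fun i => f (m + i)) k.
Proof.
rewrite /mkseq iotaD map_cat add0n; congr (_ ++ _).
have -> : iota m k = map (addn m) (iota 0 k) by rewrite -iotaDl addn0.
by rewrite -map_comp.
Qed.

Lemma mkseqS' (T : Type) (f : nat -> T) m :
  mkseq f m.+1 = f 0 :: mkseq (fun i => f i.+1) m.
Proof. by rewrite -add1n mkseq_add. Qed.

Definition FF a (xi : nat -> A) := forall m, exists b, walk a (mkseq xi m) b.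

Lemma fH_FF a xi : fH s t L a xi -> FF a xi.
Proof.
move=> [x [Hx [Hs ->]]] m; exists (s (x m)).
have H : forall m j, walk (s (x j)) (mkseq (fun i => L (x (j + i))) m) (s (x (j + m))).
  elim=> [|k IH] j; first by rewrite /= addn0.
  rewrite mkseqS'; exists (x j); split=> //; first by rewrite addn0.
  rewrite Hx; have := IH j.+1.
  by rewrite (eq_mkseq (g := fun i => L (x (j + i.+1)))) ?addSnnS // => i; rewrite addSnnS.
have := H m 0; rewrite -Hs add0n.
by rewrite (eq_mkseq (g := fun i => L (x i))) // => i; rewrite add0n.
Qed.

Fixpoint av (inh : inhabited E) (a : V) (xi : nat -> A) (k : nat) : V :=
  match k with
  | 0 => a
  | k'.+1 => t (epsilon inh (fun e => s e = av inh a xi k' /\ L e = xi k'))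
  end.
Definition ed inh a xi k := epsilon inh (fun e => s e = av inh a xi k /\ L e = xi k).

Lemma FF_fH a xi : FF a xi -> fH s t L a xi.
Proof.
move=> HF.
have [b0 /=] := HF 1%N; move=> [e [_ _ _]].
have inh : inhabited E by constructor.
have Hw : forall k b, walk a (mkseq xi k) b -> b = av inh a xi k.
  elim=> [|k IH] b; first by move=> /= ->.
  rewrite mkseqS -cats1 => /walk_cat [c [/IH -> /= [e' [He1 He2 <-]]]].
  have := @epsilon_spec E inh (fun e => s e = av inh a xi k /\ L e = xi k).
  move=> /(_ (ex_intro _ e' (conj He1 He2))) [H1 H2].
  by congr t; apply: Hrr; congruence.
have Hspec : forall k, s (ed inh a xi k) = av inh a xi k /\ L (ed inh a xi k) = xi k.
  move=> k; apply: (@epsilon_spec E inh (fun e => s e = av inh a xi k /\ L e = xi k)).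
  have [b] := HF k.+1; rewrite mkseqS -cats1 => /walk_cat [c [/Hw -> /= [e' [He1 He2 _]]]].
  by exists e'.
exists (ed inh a xi); split; last split.
- by move=> n; rewrite (proj1 (Hspec n.+1)).
- by rewrite (proj1 (Hspec 0%N)).
- by apply: functional_extensionality => n; rewrite (proj2 (Hspec n)).
Qed.


Definition catw (x : seq A) (xi : nat -> A) :=
  fun i => if i < size x then nth (xi 0) x i else xi (i - size x).

Lemma mkseq_catw x xi m : mkseq (catw x xi) (size x + m) = x ++ mkseq xi m.
Proof.
rewrite mkseq_add; congr (_ ++ _).
  apply: (@eq_from_nth _ (xi 0)); rewrite ?size_mkseq // => i Hi.
  by rewrite nth_mkseq // /catw Hi.
by apply: eq_mkseq => i; rewrite /catw ltnNge leq_addr /= addKn.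
Qed.

Lemma FF_large a xi M :
  (forall m, M <= m -> exists b, walk a (mkseq xi m) b) -> FF a xi.
Proof.
move=> H m; have [b] := H (m + M) (leq_addl _ _).
rewrite mkseq_add => /walk_cat [c [Hc _]]; by exists c.
Qed.

Lemma FF_back c x u xi : walk c x u -> FF u xi -> FF c (catw x xi).
Proof.
move=> Hw HF; apply: (@FF_large _ _ (size x)) => m Hm.
rewrite -(subnKC Hm) mkseq_catw; have [b Hb] := HF (m - size x).
exists b; apply/walk_cat; exists u; by split.
Qed.

Lemma FF_fwd d x d2 xi : FF d (catw x xi) -> walk d x d2 -> FF d2 xi.
Proof.
move=> HF Hw m; have [b] := HF (size x + m).
rewrite mkseq_catw => /walk_cat [c [Hc Hb]]; rewrite (walk_det Hw Hc); by exists b.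
Qed.

Lemma FF_sub_ext a d x a2 d2 : (forall xi, FF a xi -> FF d xi) ->
  walk a x a2 -> walk d x d2 -> forall xi, FF a2 xi -> FF d2 xi.
Proof.
move=> Hsub Ha Hd xi Hxi; apply: (FF_fwd _ Hd); apply: Hsub; exact: FF_back Ha Hxi.
Qed.

Lemma cover_step (R : V -> V -> Prop) (Rf : forall a b b', R a b -> R a b' -> b = b')
  (u : V) (l : seq V) :
  exists l', size l' + (u \in l) <= size l /\
    forall a b, a \in l -> a != u -> R a b -> b \in l'.
Proof.
elim: l => [|a0 l [l' [H1 H2]]]; first by exists [::].
case: (eqVneq a0 u) => [Ha0|Ha0].
  subst a0; exists l'; split.
    rewrite in_cons eqxx /=; move: H1; case: (u \in l) => /=; lia.
  move=> a b; rewrite in_cons => /orP [/eqP ->|Ha]; first by rewrite eqxx.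
  exact: H2.
have Hu : (u \in a0 :: l) = (u \in l) by rewrite in_cons eq_sym (negbTE Ha0).
case: (classic (exists b, R a0 b)) => [[b0 Hb0]|Hn].
  exists (b0 :: l'); split; first by rewrite Hu /=; move: H1; case: (u \in l) => /=; lia.
  move=> a b; rewrite in_cons => /orP [/eqP ->|Ha] Hau HR.
    by rewrite (Rf _ _ _ HR Hb0) mem_head.
  by rewrite in_cons (H2 _ _ Ha Hau HR) orbT.
exists l'; split; first by rewrite Hu /=; move: H1; case: (u \in l) => /=; lia.
move=> a b; rewrite in_cons => /orP [/eqP ->|Ha] Hau HR.
  by exfalso; apply: Hn; exists b.
exact: H2 Ha Hau HR.
Qed.

End Walks.

Definition pb (P : Prop) : bool := if excluded_middle_informative P then true else false.
Lemma pbE P : pb P <-> P.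
Proof. by rewrite /pb; case: excluded_middle_informative. Qed.

Section Term.
Variables (V E : finType) (s t : E -> V).
Hypothesis Hss : no_sinks_sources s t.

Lemma edge_reaches e : reaches s t (s e) (t e).
Proof. by right; exists e, [::]. Qed.

Lemma rec_exists w : exists r, recurrent s t r /\ reaches s t w r.
Proof.
suff H : forall n w, #|[set x | pb (reaches s t w x)]| <= n ->
  exists r, recurrent s t r /\ reaches s t w r by exact: H _ _ (leqnn _).
elim=> [|n IH] {}w Hn.
  have Hw : w \in [set x | pb (reaches s t w x)] by rewrite inE; apply/pbE; left.
  by move: Hn; rewrite leqn0 => /eqP /card0_eq /(_ w); rewrite Hw.
case: (classic (recurrent s t w)) => [Hr|Hnr]; first by exists w; split=> //; left.
have [[e He] _] := Hss w.
have Hww1 : reaches s t w (t e) by rewrite -He; exact: edge_reaches.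
have Hpr : [set x | pb (reaches s t (t e) x)] \proper [set x | pb (reaches s t w x)].
  apply/properP; split.
    apply/subsetP => x; rewrite !inE => /pbE H; apply/pbE; exact: reaches_trans Hww1 H.
  exists w; rewrite !inE; first by apply/pbE; left.
  apply/negP => /pbE [H|[f0 [q [Hq Hs Ht]]]]; apply: Hnr.
    by exists e, [::]; split.
  exists e, (f0 :: q); split=> //=.
  by rewrite /epath /= Hs eqxx.
have [r [Hr1 Hr2]] := IH (t e) (leq_trans (proper_card Hpr) Hn).
exists r; split=> //; exact: reaches_trans Hww1 Hr2.
Qed.

Variables (C : {set V}) (HC : terminal_component s t C) (v : V) (Hv : v \in C).

Lemma back_reach w : reaches s t v w -> reaches s t w v.
Proof.
move=> Hvw; have [[v0 [Hv0 Hmem]] Hterm] := HC.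
have [r [Hr Hwr]] := rec_exists w.
pose C' := [set x | pb (recurrent s t x /\ reaches s t r x /\ reaches s t x r)].
have HC' : component s t C'.
  by exists r; split=> // x; rewrite inE; exact: pbE.
have HrC' : r \in C' by rewrite inE; apply/pbE; split=> //; split; left.
case: (classic (C' = C)) => [Heq|Hneq].
  have := HrC'; rewrite Heq => /Hmem [_ [_ Hrv0]].
  have [_ [Hv0v _]] := proj1 (Hmem v) Hv.
  exact: reaches_trans Hwr (reaches_trans Hrv0 Hv0v).
exfalso; apply: (Hterm C' HC' Hneq); exists v, r; split=> //.
exact: reaches_trans Hvw Hwr.
Qed.

End Term.

Section Reg.
Variables (V E : finType) (A : Type) (s t : E -> V) (L : E -> A).
Hypothesis Hrr : right_resolving s L.

Definition pw (y : int -> A) k n := mkseq (fun j : nat => y (j%:Z - (n + k)%:Z)%R) n.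

Lemma pw_split y k n m : pw y k (n + m) = pw y (k + m) n ++ pw y k m.
Proof.
rewrite /pw mkseq_add; congr (_ ++ _); apply: eq_mkseq => j; congr y; lia.
Qed.

Definition G y k a := forall n, exists b, walk s t L b (pw y k n) a.

Lemma pw_suffix y k N m a b : walk s t L b (pw y k N) a -> m <= N ->
  exists b', walk s t L b' (pw y k m) a.
Proof.
move=> Hw Hm; move: Hw; rewrite -(subnK Hm) pw_split => /walk_cat [c [_ Hc]].
by exists c.
Qed.

Lemma bound (P : V -> nat -> Prop) (Q : V -> Prop)
  (Hup : forall c n m, P c n -> n <= m -> P c m)
  (Hex : forall c, Q c -> exists n, P c n) : exists N, forall c, Q c -> P c N.
Proof.
suff [N HN] : exists N, forall c, c \in enum V -> Q c -> P c N.
  by exists N => c; apply: HN; rewrite mem_enum.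
elim: (enum V) => [|c0 l [N HN]]; first by exists 0.
case: (classic (Q c0)) => [HQ|HnQ].
  have [n0 Hn0] := Hex _ HQ; exists (maxn N n0) => c; rewrite in_cons.
  move=> /orP [/eqP ->|Hc] HQc; first by apply: Hup Hn0 (leq_maxr _ _).
  exact: Hup (HN _ Hc HQc) (leq_maxl _ _).
exists N => c; rewrite in_cons => /orP [/eqP ->|Hc] HQc //; exact: HN.
Qed.

Lemma G_step y k a : G y k a -> exists c, walk s t L c (pw y k 1) a /\ G y k.+1 c.
Proof.
move=> HG; apply: NNPP => Hn.
have Hall : forall c, walk s t L c (pw y k 1) a ->
    exists n, ~ exists b, walk s t L b (pw y k.+1 n) c.
  move=> c Hc; apply: NNPP => H2; apply: Hn; exists c; split=> // n.
  apply: NNPP => H3; apply: H2; by exists n.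
have [N HN] := @bound (fun c n => ~ exists b, walk s t L b (pw y k.+1 n) c)
  (fun c => walk s t L c (pw y k 1) a)
  (fun c n m Hn' Hnm => fun H => match H with ex_intro b Hb =>
      Hn' (pw_suffix Hb Hnm) end) Hall.
have [b] := HG (N + 1)%N; rewrite pw_split addn1 => /walk_cat [c [Hb Hc]].
by apply: (HN c Hc); exists b.
Qed.

Lemma stab y : exists N, 0 < N /\
  forall c, (exists b, walk s t L b (pw y 0 N) c) -> G y 0 c.
Proof.
have [N0 HN0] := @bound (fun c n => ~ exists b, walk s t L b (pw y 0 n) c)
  (fun c => ~ G y 0 c)
  (fun c n m Hn' Hnm => fun H => match H with ex_intro b Hb =>
      Hn' (pw_suffix Hb Hnm) end)
  (fun c Hc => not_all_ex_not _ _ Hc).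
exists N0.+1; split=> // c [b Hb]; apply: NNPP => HG.
apply: (HN0 c HG); exact: pw_suffix Hb (leqnSn _).
Qed.

Fixpoint lv (y : int -> A) (u : V) (inh : inhabited V) (k : nat) : V :=
  match k with
  | 0 => u
  | k'.+1 => epsilon inh (fun c => walk s t L c (pw y k' 1) (lv y u inh k') /\ G y k'.+1 c)
  end.

Lemma konig y u (Hu : G y 0 u) (x : nat -> E) (Hx : rpath s t x) (Hs : s (x 0) = u) :
  sofic s t L (glue y (fun n => L (x n))).
Proof.
have inhV : inhabited V by constructor.
have inhE : inhabited E by constructor; exact: x 0.
have HG : forall k, G y k (lv y u inhV k).
  elim=> [|k IH] //=.
  have := @epsilon_spec V inhV (fun c => walk s t L c (pw y k 1) (lv y u inhV k) /\ G y k.+1 c).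
  by move=> /(_ (G_step IH)) [].
have Hw : forall k, walk s t L (lv y u inhV k.+1) (pw y k 1) (lv y u inhV k).
  move=> k /=.
  have := @epsilon_spec V inhV (fun c => walk s t L c (pw y k 1) (lv y u inhV k) /\ G y k.+1 c).
  by move=> /(_ (G_step (HG k))) [].
pose le k := epsilon inhE (fun e => [/\ s e = lv y u inhV k.+1,
   L e = y (0%:Z - (k + 0).+1%:Z)%R & t e = lv y u inhV k]).
have Hle : forall k, [/\ s (le k) = lv y u inhV k.+1,
   L (le k) = y (0%:Z - (k + 0).+1%:Z)%R & t (le k) = lv y u inhV k].
  move=> k; apply: (@epsilon_spec E inhE (fun e => [/\ s e = lv y u inhV k.+1,
   L e = y (0%:Z - (k + 0).+1%:Z)%R & t e = lv y u inhV k])).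
  have := Hw k; rewrite /pw /= => -[e [H1 H2 H3]]; exists e; split=> //.
  rewrite H2; congr y; lia.
pose z' (j : int) := match j with Posz m => x m | Negz m => le m end.
exists z'; split.
  move=> [m|[|m]].
  - by rewrite (_ : (Posz m + 1)%R = Posz m.+1); [exact: Hx | lia].
  - rewrite (_ : (Negz 0 + 1)%R = Posz 0); last by rewrite NegzE; lia.
    by have [_ _ ->] := Hle 0%N.
  - rewrite (_ : (Negz m.+1 + 1)%R = Negz m); last by rewrite !NegzE; lia.
    by have [_ _ ->] := Hle m.+1; have [-> _ _] := Hle m.
apply: functional_extensionality => -[m|m] //=.
rewrite /glue /=; have [_ -> _] := Hle m; congr y; rewrite NegzE; lia.
Qed.

End Reg.

Section Magic.
Variables (V E : finType) (A : Type) (s t : E -> V) (L : E -> A).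

Lemma split_window (T : Type) (g : nat -> T) m n :
  [seq g k | k <- iota m n] = mkseq (fun k => g (m + k)) n.
Proof.
have -> : iota m n = map (addn m) (iota 0 n) by rewrite -iotaDl addn0.
by rewrite -map_comp.
Qed.

Lemma window_walk z : edge_shift s t z -> forall n (i : int),
  walk s t L (s (z i)) (mkseq (fun k : nat => L (z (i + k%:Z)%R)) n) (s (z (i + n%:Z)%R)).
Proof.
move=> Hz; elim=> [|n IH] i; first by rewrite /= addr0.
rewrite mkseqS'; exists (z i); split=> //; first by rewrite addr0.
rewrite Hz; have := IH (i + 1)%R.
rewrite (_ : (i + 1 + n%:Z)%R = (i + n.+1%:Z)%R); last by lia.
by rewrite (eq_mkseq (g := fun k : nat => L (z (i + k.+1%:Z)%R))) // => k; congr (L (z _)); lia.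
Qed.



Lemma magic (W : seq A) (v : V) :
  (forall a b, walk s t L a W b -> b = v) -> synchronizing s t L W.
Proof.
move=> Hm u x [y1 [i1 [[z1 [Hz1 ->]] H1]]] [y2 [i2 [[z2 [Hz2 ->]] H2]]].
rewrite size_cat iotaD map_cat add0n in H1.
rewrite size_cat iotaD map_cat add0n in H2.
have Hs1 : size [seq L (z1 (i1 + k%:Z)%R) | k <- iota 0 (size u)] = size u
  by rewrite size_map size_iota.
have Hs2 : size [seq L (z2 (i2 + k%:Z)%R) | k <- iota 0 (size W)] = size W
  by rewrite size_map size_iota.
have HW1 := congr1 (drop (size u)) H1.
rewrite drop_size_cat // drop_size_cat // split_window in HW1.
have HW2 := congr1 (take (size W)) H2.
rewrite take_size_cat // take_size_cat // in HW2.
have Hx2 := congr1 (drop (size W)) H2.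
rewrite drop_size_cat // drop_size_cat // split_window in Hx2.
pose c1 := (i1 + (size u)%:Z + (size W)%:Z)%R.
pose c2 := (i2 + (size W)%:Z)%R.
have Hv1 : s (z1 c1) = v.
  apply: (Hm (s (z1 (i1 + (size u)%:Z)%R))).
  have E1 : mkseq (fun k : nat => L (z1 (i1 + (size u)%:Z + k%:Z)%R)) (size W) = W.
    rewrite {2}HW1; apply: eq_mkseq => k; congr (L (z1 _)); lia.
  have := (window_walk Hz1) (size W) (i1 + (size u)%:Z)%R.
  by rewrite E1.
have Hv2 : s (z2 c2) = v.
  apply: (Hm (s (z2 i2))).
  have := (window_walk Hz2) (size W) i2.
  move=> Hw; rewrite HW2; exact: Hw.
pose z3 (j : int) := if (j < c1)%R then z1 j else z2 (j - c1 + c2)%R.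
exists (fun j => L (z3 j)), i1; split.
  exists z3; split=> // j; rewrite /z3.
  case: ifP => Hj; case: ifP => Hj1.
  - exact: Hz1.
  - rewrite Hz1 (_ : (j + 1)%R = c1); last by move: Hj Hj1; lia.
    rewrite Hv1 -Hv2; congr (s (z2 _)); lia.
  - by move: Hj Hj1; lia.
  - rewrite Hz2; congr (s (z2 _)); lia.
rewrite catA [in X in iota _ X]size_cat iotaD map_cat add0n; congr (_ ++ _).
  rewrite size_cat iotaD map_cat add0n H1; congr (_ ++ _).
    apply/eq_in_map => k; rewrite mem_iota => /andP [_ Hk].
    by rewrite /z3 ifT //; rewrite /c1; lia.
  apply/eq_in_map => k; rewrite mem_iota => /andP [Hk1 Hk].
  by rewrite /z3 ifT //; rewrite /c1; lia.
rewrite size_cat split_window {1}Hx2; apply: eq_mkseq => k.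
rewrite /z3 ifF; last by rewrite /c1; lia.
congr (L (z2 _)); rewrite /c1 /c2; lia.
Qed.

End Magic.

Theorem lemma2p21 (V E : finType) (A : Type) (s t : E -> V) (L : E -> A)
  (Hss : no_sinks_sources s t)
  (Hrr : right_resolving s L)
  (Hreg : regular_graph s t L)
  (Hfs : follower_separated s t L)
  (C : {set V}) (HC : terminal_component s t C) :
  forall v, v \in C ->
    exists (e0 : E) (p : seq E),
      [/\ epath s t e0 p, t (last e0 p) = v & synchronizing s t L (map L (e0 :: p))].
Proof.
move=> v Hv.
have [z [Hz [Hzv Hequiv]]] := Hreg v.
pose y := fun i => L (z i).
have [N [HN0 HNG]] := stab s t L y.
have Hsub0 : forall u, (exists b, walk s t L b (pw y 0 N) u) ->
    forall xi, FF s t L u xi -> FF s t L v xi.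
  move=> u Hu xi /(FF_fH Hrr) [x [Hx [Hs ->]]].
  have Hso := konig (HNG u Hu) Hx Hs.
  apply: fH_FF; apply/Hequiv; split; last exact: Hso.
  exists (glue y (fun n => L (x n))); split; first exact: Hso.
  by apply: functional_extensionality.
have Hz0 : s (z 0%R) = v by rewrite -Hzv Hz addNr.
have Hinit : walk s t L (s (z (- N%:Z)%R)) (pw y 0 N) v.
  have := window_walk L Hz N (- N%:Z)%R.
  rewrite addNr Hz0 /pw (eq_mkseq (g := fun j : nat => y (j%:Z - (N + 0)%:Z)%R)) //.
  by move=> j; rewrite /y; congr (L (z _)); lia.
pose Inv W d := [/\ exists a, walk s t L a W d, reaches s t v d &
   forall u, (exists a, walk s t L a W u) -> forall xi, FF s t L u xi -> FF s t L d xi].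
pose Cover W (l : seq V) := forall u, (exists a, walk s t L a W u) -> u \in l.
pose Goal := exists W2, W2 <> [::] /\ (exists a, walk s t L a W2 v) /\
   forall a b, walk s t L a W2 b -> b = v.
have step : forall W d l, W <> [::] -> Inv W d -> Cover W l ->
   Goal \/ (exists W' d' l', [/\ W' <> [::], Inv W' d', Cover W' l' & size l' < size l]).
  move=> W d l HW [[a0 Ha0] Hvd Hsub] Hcov.
  case: (classic (forall u, (exists a, walk s t L a W u) -> u = d)) => [Hall|Hnall].
    left; have Hdv := back_reach Hss HC Hv Hvd.
    case: Hdv => [Edv|[e0 [p [Hp Hs Ht]]]].
      subst d; exists W; split=> //; split; first by exists a0.
      by move=> a b Hab; exact: Hall (ex_intro _ a Hab).
    have Hx2 := epath_walk L Hp; rewrite Hs Ht in Hx2.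
    exists (W ++ map L (e0 :: p)); split; first by case: W HW Ha0 Hsub Hcov Hall.
    split; first by exists a0; apply/walk_cat; exists d.
    move=> a b /walk_cat [c [Hc Hcb]]; have Ecd := Hall c (ex_intro _ a Hc); subst c.
    exact (walk_det Hrr Hcb Hx2).
  right.
  have [u [[a1 Hu] Hud]] : exists u, (exists a, walk s t L a W u) /\ u <> d.
    apply: NNPP => H; apply: Hnall => u Hu; apply: NNPP => H2; apply: H; exists u; by split.
  have Hsu := Hsub u (ex_intro _ a1 Hu).
  have [xi [HFd HnFu]] : exists xi, FF s t L d xi /\ ~ FF s t L u xi.
    apply: NNPP => H; apply: Hud; apply: Hfs => xi; split => Hx.
      apply: (FF_fH Hrr); apply: Hsu; exact: fH_FF.
    apply: (FF_fH Hrr); apply: NNPP => Hn; apply: H; exists xi; split=> //; exact: fH_FF.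
  have [m Hm] : exists m, ~ exists b, walk s t L u (mkseq xi m) b by apply: not_all_ex_not.
  have [d' Hdd'] := HFd m.
  have [l' [Hl'1 Hl'2]] := @cover_step V (fun a b => walk s t L a (mkseq xi m) b)
     (fun a b b' H H' => walk_det Hrr H H') u l.
  exists (W ++ mkseq xi m), d', l'; split.
  - by case: W HW Ha0 Hsub Hcov Hnall Hu Hsu.
  - split.
    + by exists a0; apply/walk_cat; exists d.
    + exact: reaches_trans Hvd (walk_reaches Hdd').
    + move=> u' [a /walk_cat [c [Hac Hcu']]].
      exact (FF_sub_ext Hrr (Hsub c (ex_intro _ a Hac)) Hcu' Hdd').
  - move=> u' [a /walk_cat [c [Hac Hcu']]].
    apply: (Hl'2 c u' (Hcov c (ex_intro _ a Hac))) => //.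
    by apply/eqP => Ecu; subst c; apply: Hm; exists u'.
  - by move: Hl'1; rewrite (Hcov u (ex_intro _ a1 Hu)) addn1.
have iter : forall n W d l, size l <= n -> W <> [::] -> Inv W d -> Cover W l -> Goal.
  elim=> [|n IH] W d l Hn HW HI HCo; case: (step W d l HW HI HCo) => // -[W' [d' [l' [H1 H2 H3 H4]]]].
    by move: Hn H4; lia.
  apply: (IH W' d' l') => //; move: Hn H4; lia.
have [W2 [HW2 [[a Ha] Hmag]]] : Goal.
  apply: (iter _ (pw y 0 N) v (enum V) (leqnn _)).
  - move=> H; have := size_mkseq (fun j : nat => y (j%:Z - (N + 0)%:Z)%R) N.
    rewrite -/(pw y 0 N) H /=; lia.
  - split=> //; [by exists (s (z (- N%:Z)%R)) | by left].
  - by move=> u _; rewrite mem_enum.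
case: W2 HW2 Ha Hmag => [//|l0 w] _ Ha Hmag.
have [e0 [p [Hp _ Ht Hmap]]] := walk_epath Ha.
exists e0, p; split=> //; rewrite Hmap; exact: magic Hmag.
Qed.
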